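(* Let $V$ satisfy (C1)–(C4), let $\mathbb P(A):=V_A(1_\Omega)$, and for each $q\in\mathbb Q$ let $u(\cdot,q)\in\mathcal L^1(\Omega,\mathcal F,\mathbb P)$ be a version of the Radon–Nikodym derivative $d\mu_q/d\mathbb P$, where $\mu_q(A):=V_A(q)$ (which is absolutely continuous with respect to $\mathbb P$), chosen with $u(\omega,0)=0$ for all $\omega$. Define $$A^{\mathbb Q}:=\{\omega: u(\omega,q_1)<u(\omega,q_2)\ \forall q_1<q_2\in\mathbb Q\},\qquad B^{\mathbb Q}:=\{\omega: u(\omega,q)=\inf_{\tilde q\in\mathbb Q,\tilde q>q}u(\omega,\tilde q)\ \forall q\in\mathbb Q\}.$$ Then $A^{\mathbb Q},B^{\mathbb Q}\in\mathcal F$ and $\mathbb P(A^{\mathbb Q})=\mathbb P(B^{\mathbb Q})=1$.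
   Context: $\mathcal L^\infty(\Omega,\mathcal F)$: bounded $\mathcal F$-measurable real functions; $V:\mathcal F\times\mathcal L^\infty(\Omega,\mathcal F)\to\mathbb R$, $(A,f)\mapsto V_A(f)$. (C1) for every $f$, $A\mapsto V_A(f)$ is a finite signed measure, $V_A(0)=0$, and $A\mapsto V_A(1_\Omega)$ is a probability measure; (C2) $V_A(f)=V_\Omega(f1_A)$; (C3) $f\le g$ pointwise implies $V_A(f)\le V_A(g)$ for all $A$, and $\mathbb P(A)>0$ implies $V_A(x)<V_A(y)$ for real $x<y$; (C4) for every $A$, $V_A(f_n)\to V_A(f)$ whenever $(f_n)$ is uniformly bounded and converges pointwise everywhere to $f$. *)

(* Defs.v *)
From HB Require Import structures.
From mathcomp Require Import all_boot all_order all_algebra.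
From mathcomp Require Import all_classical all_reals all_analysis.
Set Implicit Arguments. Unset Strict Implicit. Unset Printing Implicit Defensive.
Import Order.TTheory GRing.Theory Num.Theory.
Import numFieldNormedType.Exports.
Local Open Scope classical_set_scope.
Local Open Scope ring_scope.

Section Defs.
Context (d : measure_display) (Omega : measurableType d) (R : realType).

Definition bmeas (f : Omega -> R) : Prop :=
  measurable_fun setT f /\ exists M : R, forall x, `|f x| <= M.

(* V : F x L^oo -> R, represented as a total function; conditions only
   constrain it on measurable sets and bounded measurable functions. *)
Definition C1 (V : set Omega -> (Omega -> R) -> R) : Prop :=
  (forall f, bmeas f ->
     V set0 f = 0 /\
     forall F : nat -> set Omega, (forall n, measurable (F n)) ->
       trivIset setT F ->
       (fun n => \sum_(0 <= i < n) V (F i) f) @ \oo --> V (\bigcup_n F n) f) /\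
  (forall A, measurable A -> V A (fun _ => 0) = 0) /\
  (forall A, measurable A -> 0 <= V A (fun _ => 1)) /\
  V setT (fun _ => 1) = 1.

Definition C2 (V : set Omega -> (Omega -> R) -> R) : Prop :=
  forall A f, measurable A -> bmeas f ->
    V A f = V setT (fun x => f x * \1_A x).

Definition C3 (V : set Omega -> (Omega -> R) -> R) : Prop :=
  (forall A f g, measurable A -> bmeas f -> bmeas g ->
     (forall x, f x <= g x) -> V A f <= V A g) /\
  (forall A (x y : R), measurable A -> 0 < V A (fun _ => 1) -> x < y ->
     V A (fun _ => x) < V A (fun _ => y)).

Definition C4 (V : set Omega -> (Omega -> R) -> R) : Prop :=
  forall A (fn : nat -> Omega -> R) (f : Omega -> R), measurable A ->
    (forall n, bmeas (fn n)) -> bmeas f ->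
    (exists M : R, forall n x, `|fn n x| <= M) ->
    (forall x, (fun n => fn n x) @ \oo --> f x) ->
    (fun n => V A (fn n)) @ \oo --> V A f.

Definition AQ (u : Omega -> rat -> R) : set Omega :=
  [set w | forall q1 q2 : rat, q1 < q2 -> u w q1 < u w q2].

Definition BQ (u : Omega -> rat -> R) : set Omega :=
  [set w | forall q : rat,
     (u w q)%:E = ereal_inf [set (u w q')%:E | q' in [set q' : rat | q < q']]].

End Defs.

(* Main.v *)
Require Import Defs.
From HB Require Import structures.
From mathcomp Require Import all_boot all_order all_algebra.
From mathcomp Require Import all_classical all_reals all_analysis.
From mathcomp Require Import measurable_realfun.
Import Order.TTheory GRing.Theory Num.Theory.
Import numFieldNormedType.Exports.
Local Open Scope classical_set_scope.
Local Open Scope ring_scope.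
Section Helpers.
Context (d : measure_display) (Omega : measurableType d) (R : realType).
Variable P : probability Omega R.

Lemma negl_count (T : countType) (G : T -> set Omega) :
  (forall t, P.-negligible (G t)) -> P.-negligible (\bigcup_t G t).
Proof.
move=> hG.
pose F n := if @unpickle T n is Some t then G t else set0.
apply: (negligibleS _ (negligible_bigcup (F:=F) _)).
  move=> w [t _ Gt]; exists (pickle t) => //; by rewrite /F pickleK.
move=> n; rewrite /F; case: unpickle => //; exact: negligible_set0.
Qed.

Lemma mset_cond (b : Prop) (A : set Omega) : measurable A ->
  measurable [set w | b /\ A w].
Proof.
move=> mA; have [hb|hb] := pselect b.
  by rewrite (_ : [set w | b /\ A w] = A) //; apply/seteqP; split=> x /=; [case|].
by rewrite (_ : [set w | b /\ A w] = set0) //; apply/seteqP; split=> x /=; [case|].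
Qed.

Lemma bigcap_rat (F : rat -> set Omega) : (forall i, measurable (F i)) ->
  measurable (\bigcap_i F i).
Proof.
move=> mF; rewrite -[X in measurable X]setCK setC_bigcap; apply: measurableC.
by apply: bigcupT_measurable_rat => i; exact/measurableC.
Qed.

Variables (V : set Omega -> (Omega -> R) -> R) (u : Omega -> rat -> R).
Hypotheses (h1 : C1 V) (h3 : C3 V) (h4 : C4 V)
  (hP : forall A, measurable A -> P A = (V A (fun _ => 1))%:E)
  (hu : forall q : rat, measurable_fun setT (fun w => u w q) /\
     P.-integrable setT (fun w => (u w q)%:E) /\
     forall A, measurable A ->
       (V A (fun _ => ratr q))%:E = (\int[P]_(w in A) (u w q)%:E)%E).

Lemma mle (f g : Omega -> R) : measurable_fun setT f -> measurable_fun setT g ->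
  measurable [set w | f w <= g w].
Proof. by move=> mf mg; rewrite -[X in measurable X]setTI; exact: measurable_fun_le. Qed.

Lemma null1 q1 q2 : q1 < q2 -> P [set w | u w q2 <= u w q1] = 0%E.
Proof.
move=> q12; set A := [set w | _].
have mA : measurable A by apply: mle; [case: (hu q2)|case: (hu q1)].
apply/eqP; apply/negPn/negP => PA.
have Vpos : 0 < V A (fun _ => 1).
  by rewrite -lte_fin -hP // lt0e PA /=.
have := h3.2 A (ratr q1) (ratr q2) mA Vpos; rewrite ltr_rat => /(_ q12).
rewrite -lte_fin.
have [_ [i1 e1]] := hu q1; have [_ [i2 e2]] := hu q2.
rewrite e1 // e2 //.
apply/negP; rewrite -leNgt; apply: le_integral => //.
- exact: integrableS i2.
- exact: integrableS i1.
by move=> x /set_mem; rewrite lee_fin.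
Qed.

Lemma bm_cst (r : R) : bmeas (fun _ : Omega => r).
Proof. by split; [exact: measurable_cst | exists `|r|]. Qed.

Lemma null2 q k : P [set w | forall n : nat,
   u w q + (k.+1%:R)^-1 <= u w (q + (n.+1%:R)^-1)] = 0%E.
Proof.
set c : R := (k.+1%:R)^-1; set A := [set w | _].
have c0 : 0 < c by rewrite invr_gt0 ltr0n.
have mA : measurable A.
  rewrite (_ : A = \bigcap_n [set w | u w q + c <= u w (q + (n.+1%:R)^-1)]).
    apply: bigcapT_measurable => n; apply: mle.
      by apply: measurable_funD => //; case: (hu q).
    by case: (hu (q + (n.+1%:R)^-1)).
  by apply/seteqP; split => [w H n _|w H n]; [exact: H | exact: (H n I)].
have key n : V A (fun _ => ratr q) + c * V A (fun _ => 1)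
     <= V A (fun _ => ratr (q + (n.+1%:R)^-1)).
  rewrite -lee_fin EFinD EFinM -hP //.
  have [_ [iq eq]] := hu q; have [_ [iqn eqn]] := hu (q + (n.+1%:R)^-1).
  rewrite eq // eqn //.
  have iqA : P.-integrable A (fun w => (u w q)%:E) by exact: integrableS iq.
  have icA : P.-integrable A (fun w => c%:E) by exact: finite_measure_integrable_cst.
  have := integral_cst P mA c%:E => /= <-.
  have := integralD mA iqA icA => /= <-.
  apply: le_integral => //.
  - exact: (integrableD mA iqA icA).
  - exact: integrableS iqn.
  by move=> x /set_mem /(_ n); rewrite -EFinD lee_fin.
have hc : (fun n => V A (fun _ => ratr (q + (n.+1%:R)^-1))) @ \oo
     --> V A (fun _ => ratr q).
  apply: h4 => //; first by move=> n; exact: bm_cst.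
    exact: bm_cst.
    exists (`|ratr q| + 1) => n x.
    rewrite rmorphD /= fmorphV /= rmorph_nat.
    apply: (le_trans (ler_normD _ _)); rewrite lerD2l.
    by rewrite ger0_norm ?invr_ge0 // invf_le1 // ler1n.
  move=> x; rewrite -[X in _ --> X]addr0.
  under eq_fun do rewrite rmorphD /= fmorphV /= rmorph_nat.
  apply: cvgD; first exact: cvg_cst.
  exact: cvg_harmonic.
have L : V A (fun _ => ratr q) + c * V A (fun _ => 1) <= V A (fun _ => ratr q).
  rewrite -[leRHS](cvg_lim _ hc) //.
  exact: limr_ge (cvgP _ hc) (nearW _ key).
move: L; rewrite gerDl pmulr_rle0 // => V1.
have V0 := h1.2.2.1 A mA.
by rewrite hP // (le_anti (introT andP (conj V1 V0))).
Qed.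

Lemma mlt (f g : Omega -> R) : measurable_fun setT f -> measurable_fun setT g ->
  measurable [set w | f w < g w].
Proof.
move=> mf mg; rewrite (_ : [set w | f w < g w] = ~` [set w | g w <= f w]).
  by apply: measurableC; exact: mle.
by apply/seteqP; split => w /= h; [rewrite leNgt h | rewrite ltNge; apply/negP].
Qed.

Lemma BQ_char w q :
  (u w q)%:E = ereal_inf [set (u w q')%:E | q' in [set q' : rat | q < q']] <->
  (forall q', q < q' -> u w q <= u w q') /\
  (forall k : nat, exists q', q < q' /\ u w q' < u w q + (k.+1%:R)^-1).
Proof.
split.
  move=> E; split.
    move=> q' qq'; rewrite -lee_fin E; apply: ereal_inf_lbound; exists q' => //.
  move=> k.
  have : (ereal_inf [set (u w q')%:E | q' in [set q' : rat | (q < q')%R]]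
      < (u w q + (k.+1%:R)^-1)%:E)%E.
    by rewrite -E lte_fin ltrDl invr_gt0 ltr0n.
  move=> /ereal_inf_lt [y [q' qq' <-] hy]; exists q'; split => //.
move=> [lb ap]; apply: le_anti; apply/andP; split.
  by apply: le_ereal_inf_tmp => _ [q' qq' <-]; rewrite lee_fin; exact: lb.
apply/lee_addgt0Pr => e e0.
have [k hk] := ltr_add_invr (x := e) (y := 0) ltac:(by rewrite e0).
have [q' [qq' hq']] := ap k.
apply: (@le_trans _ _ (u w q')%:E).
  by apply: ereal_inf_lbound; exists q'.
rewrite -EFinD lee_fin; apply: (le_trans (ltW hq')); rewrite lerD2l.
by rewrite add0r in hk; exact: ltW.
Qed.

Lemma mu_ q : measurable_fun setT (fun w => u w q).
Proof. by case: (hu q). Qed.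

Lemma mAQ : measurable (AQ u).
Proof.
rewrite (_ : AQ u = \bigcap_q1 \bigcap_q2
    ~` [set w | q1 < q2 /\ u w q2 <= u w q1]).
  apply: bigcap_rat => q1; apply: bigcap_rat => q2.
  by apply/measurableC/mset_cond/mle; exact: mu_.
apply/seteqP; split => w /= H.
  by move=> q1 _ q2 _ [q12]; apply/negP; rewrite -ltNge; exact: H.
move=> q1 q2 q12; rewrite ltNge; apply/negP => h.
exact: (H q1 I q2 I (conj q12 h)).
Qed.

Lemma mBQ : measurable (BQ u).
Proof.
rewrite (_ : BQ u = \bigcap_q (
    (\bigcap_q' ~` [set w | q < q' /\ u w q' < u w q]) `&`
    \bigcap_(k : nat) \bigcup_q' [set w | q < q' /\ u w q' < u w q + (k.+1%:R)^-1])).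
  apply: bigcap_rat => q; apply: measurableI.
    apply: bigcap_rat => q'.
    by apply/measurableC/mset_cond/mlt; exact: mu_.
  apply: bigcapT_measurable => k; apply: bigcupT_measurable_rat => q'.
  apply/mset_cond/mlt; first exact: mu_.
  by apply: measurable_funD => //; exact: mu_.
apply/seteqP; split => w /= H.
  move=> q _; have [lb ap] := (BQ_char w q).1 (H q); split.
    by move=> q' _ [qq']; apply/negP; rewrite -leNgt; exact: lb.
  move=> k _; have [q' hq'] := ap k; by exists q'.
move=> q; apply/(BQ_char w q); have [H1 H2] := H q I; split.
  move=> q' qq'; rewrite leNgt; apply/negP => h.
  exact: (H1 q' I (conj qq' h)).
by move=> k; have [q' _ hq'] := H2 k I; exists q'.
Qed.

Lemma full_of (B : set Omega) (M : set Omega) : measurable B -> measurable M ->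
  P M = 0%E -> ~` M `<=` B -> P B = 1%E.
Proof.
move=> mB mM PM sub; apply: le_anti; apply/andP; split.
  exact: probability_le1.
have := probability_setC P mM; rewrite PM sube0 => <-.
by apply: le_measure => //; rewrite inE //; exact: measurableC.
Qed.

Lemma main_sec :
  measurable (AQ u) /\ measurable (BQ u) /\ P (AQ u) = 1%E /\ P (BQ u) = 1%E.
Proof.
pose G1 (p : rat * rat) := [set w | p.1 < p.2 /\ u w p.2 <= u w p.1].
pose G2 (p : rat * nat) := [set w | forall n : nat,
   u w p.1 + (p.2.+1%:R)^-1 <= u w (p.1 + (n.+1%:R)^-1)].
have nN : P.-negligible ((\bigcup_p G1 p) `|` (\bigcup_p G2 p)).
  apply: negligibleU; apply: negl_count.
    move=> [q1 q2]; have [h|h] := boolP (q1 < q2).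
      apply: (negligibleS (A := [set w | u w q2 <= u w q1])).
        by move=> w [].
      by apply/negligibleP; [apply: mle; exact: mu_ | exact: null1].
    apply: (negligibleS (A := set0)); last exact: negligible_set0.
    by move=> w /= [h']; rewrite h' in h.
  move=> [q k]; apply/negligibleP; last exact: null2.
  rewrite (_ : G2 (q, k) = \bigcap_n [set w | u w q + (k.+1%:R)^-1
      <= u w (q + (n.+1%:R)^-1)]).
    apply: bigcapT_measurable => n; apply: mle; last exact: mu_.
    by apply: measurable_funD => //; exact: mu_.
  by apply/seteqP; split => [w H n _|w H n]; [exact: H | exact: (H n I)].
have [M [mM PM NM]] := nN.
have hA : ~` M `<=` AQ u.
  move=> w Mw q1 q2 q12; rewrite ltNge; apply/negP => h; apply: Mw; apply: NM.
  by left; exists (q1, q2).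
have hB : ~` M `<=` BQ u.
  move=> w Mw q; apply/(BQ_char w q); split.
    by move=> q' qq'; apply: ltW; exact: hA.
  move=> k; have [//|hn] := pselect (exists q', q < q' /\
     u w q' < u w q + (k.+1%:R)^-1).
  exfalso; apply: Mw; apply: NM; right; exists (q, k) => // n /=.
  rewrite leNgt; apply/negP => lt; apply: hn; exists (q + (n.+1%:R)^-1).
  by split => //; rewrite ltrDl invr_gt0 ltr0n.
split; first exact: mAQ.
split; first exact: mBQ.
by split; apply: (full_of _ _ _ mM PM); [exact: mAQ | exact: hA | exact: mBQ | exact: hB].
Qed.
End Helpers.

Theorem mainTheorem9 (d : measure_display) (Omega : measurableType d)
  (R : realType) (V : set Omega -> (Omega -> R) -> R)
  (P : probability Omega R) (u : Omega -> rat -> R) :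
  C1 V -> C2 V -> C3 V -> C4 V ->
  (forall A, measurable A -> P A = (V A (fun _ => 1))%:E) ->
  (forall q : rat, measurable_fun setT (fun w => u w q) /\
     P.-integrable setT (fun w => (u w q)%:E) /\
     forall A, measurable A ->
       (V A (fun _ => ratr q))%:E = (\int[P]_(w in A) (u w q)%:E)%E) ->
  (forall w, u w 0 = 0) ->
  measurable (AQ u) /\ measurable (BQ u) /\ P (AQ u) = 1%E /\ P (BQ u) = 1%E.
Proof.
move=> h1 _ h3 h4 hP hu _.
exact: (@main_sec d Omega R P V u h1 h3 h4 hP hu).
Qed.
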